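(* Let $\Gamma$ be a scale on $\overline{\mathcal N}$ such that $\Gamma(x,\cdot)$ is continuous for every $x\in\overline{\mathcal N}$. Let $G$ denote the group $F(\mathcal N)$ equipped with the left-invariant metric $\delta_\Gamma$. Then for every $w\in\overline{\mathcal N}$ (viewed as an element of $F(\mathcal N)$) and every $r\in\mathbb R_+$, $\Gamma_G(w,r)\le\Gamma(w,r)$.
   Context: Free groups: for a nonempty set $X$, let $X^{-1}=\{x^{-1}:x\in X\}$ be a disjoint copy of $X$ and $e\notin X\cup X^{-1}$ a new symbol; put $\overline{X}=X\cup X^{-1}\cup\{e\}$, with $(x^{-1})^{-1}=x$ and $e^{-1}=e$. $W(X)$ is the set of nonempty finite words over $\overline X$, $|w|$ the length of $w$. A word is irreducible if it is $e$ or $x_0\cdots x_n$ with all $x_i\ne e$ and $x_i\ne x_{i+1}^{-1}$. The reduced word $w'$ of $w\in W(X)$ is obtained by repeatedly replacing occurrences of $xx^{-1}$ by $e$ and deleting $e$ from $w_1ew_2$ when $w_1$ or $w_2$ is nonempty. $F(X)$ is the set of irreducible words with product $u\cdot v=(u^\frown v)'$; it is the free group on $X$ with identity $e$. Metric on $\overline X$: if $d\le 1$ is a metric on $X$, extend it to $\overline X$ by $d(x^{-1},y^{-1})=d(x,y)$ and $d(x^{-1},y)=d(x,e)=d(x^{-1},e)=1$ for $x,y\in X$ (symmetric, $d(e,e)=0$). Match: for $m\le n$, a bijection $\theta$ of $\{m,\dots,n\}$ with $\theta^2=\mathrm{id}$ and no $i<j<\theta(i)<\theta(j)$. Scale: $\Gamma:\overline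 X\times\mathbb{R}_+\to\mathbb{R}_+$ such that for all $x\in\overline X$, $r\in\mathbb{R}_+$: (i) $\Gamma(e,r)=r$ and $\Gamma(x,r)\ge r$; (ii) $\Gamma(x,r)=0$ iff $r=0$; (iii) $\Gamma(x,\cdot)$ is monotone increasing; (iv) $\lim_{r\to0}\Gamma(x,r)=0$. Norms and metrics: for $w\in W(X)$ with $|w|=l+1$ and a match $\theta$ on $\{0,\dots,l\}$, define $N^\theta_\Gamma(w)$ by induction on $l$: if $l=0$ and $w=x$, $N^\theta_\Gamma(w)=d(e,x)$; if $l>0$ and $\theta(0)=k<l$, write $w=w_1^\frown w_2$ with $|w_1|=k+1$ and set $N^\theta_\Gamma(w)=N^{\theta\restriction\{0..k\}}_\Gamma(w_1)+N^{\theta\restriction\{k+1..l\}}_\Gamma(w_2)$; if $l>0$ and $\theta(0)=l$, write $w=x^{-1}w_1y$ with $x,y\in\overline X$ and set $N^\theta_\Gamma(w)=d(x,y)+\max\{\Gamma(x,N^{\theta_1}_\Gamma(w_1)),\Gamma(y,N^{\theta_1}_\Gamma(w_1))\}$ with $\theta_1=\theta\restriction\{1,\dots,l-1\}$ (and $N^{\theta_1}_\Gamma(w_1)=0$ if $w_1$ is empty). For $w\in F(X)$, $N_\Gamma(w)=\inf\{N^\theta_\Gamma(w^* ): w^*\in W(X),\ (w^* )'=w,\ \theta \text{ a match on }\{0,\dots,|w^*|-1\}\}$, and $\delta_\Gamma(u,v)=N_\Gamma(u^{-1}v)$, a left-invariant metric on $F(X)$. Scale of a group: for a topological group $G$ with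 compatible left-invariant metric $d_G$, $\Gamma_G(g,r)=\max\{r,\sup\{d_G(1_G,g^{-1}hg):d_G(1_G,h)\le r\}\}$. Baire space: $\mathcal N=\omega^\omega$ with metric $d(x,y)=\max\{2^{-n}:x(n)\ne y(n)\}$ ($d(x,x)=0$). *)

(* Defs.v *)
From HB Require Import structures.
From mathcomp Require Import all_boot all_order all_algebra.
From mathcomp Require Import all_classical all_reals all_analysis.
From Stdlib Require Import ClassicalEpsilon.
Set Implicit Arguments. Unset Strict Implicit. Unset Printing Implicit Defensive.
Import Order.TTheory GRing.Theory Num.Theory.
Import numFieldNormedType.Exports.
Local Open Scope classical_set_scope.
Local Open Scope ring_scope.

(* Letters of X-bar = X ∪ X^{-1} ∪ {e}. *)
Inductive letter (X : Type) : Type :=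
| Gen of X
| Inv of X
| E.
Arguments E {X}.

Definition linv (X : Type) (a : letter X) : letter X :=
  match a with Gen x => Inv x | Inv x => Gen x | E => E end.

(* Extension of a metric d <= 1 on X to X-bar. *)
Definition dbar (R : realType) (X : Type) (d : X -> X -> R) (a b : letter X) : R :=
  match a, b with
  | Gen x, Gen y => d x y
  | Inv x, Inv y => d x y
  | E, E => 0
  | _, _ => 1
  end.

Definition irreducible (X : Type) (w : seq (letter X)) : Prop :=
  w = [:: E] \/
  (w <> [::] /\ (forall i, (i < size w)%N -> nth E w i <> E) /\
   (forall i, (i.+1 < size w)%N -> nth E w i <> linv (nth E w i.+1))).

Definition red_step (X : Type) (w v : seq (letter X)) : Prop :=
  (exists w1 w2 x, w = w1 ++ [:: x; linv x] ++ w2 /\ v = w1 ++ [:: E] ++ w2) \/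
  (exists w1 w2, w = w1 ++ E :: w2 /\ (w1 <> [::] \/ w2 <> [::]) /\ v = w1 ++ w2).

Inductive red_star (X : Type) : seq (letter X) -> seq (letter X) -> Prop :=
| red_refl w : red_star w w
| red_trans u v w : red_step u v -> red_star v w -> red_star u w.

Definition reduced (X : Type) (w : seq (letter X)) : seq (letter X) :=
  epsilon (inhabits [:: E]) (fun v => irreducible v /\ red_star w v).

Definition fmul (X : Type) (u v : seq (letter X)) := reduced (u ++ v).
Definition finv (X : Type) (u : seq (letter X)) := rev (map (@linv X) u).

Definition is_match (m n : nat) (th : nat -> nat) : Prop :=
  (forall i, (m <= i <= n)%N -> (m <= th i <= n)%N /\ th (th i) = i) /\
  (forall i j, (m <= i <= n)%N -> (m <= j <= n)%N ->
     ~ [/\ (i < j)%N, (j < th i)%N & (th i < th j)%N]).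

Definition is_scale (R : realType) (X : Type) (Gam : letter X -> R -> R) : Prop :=
  [/\ (forall r, 0 <= r -> Gam E r = r),
      (forall x r, 0 <= r -> r <= Gam x r),
      (forall x r, 0 <= r -> (Gam x r = 0 <-> r = 0)),
      (forall x r s, 0 <= r -> r <= s -> Gam x r <= Gam x s) &
      (forall x, Gam x r @[r --> 0^'+] --> 0)].

Section Norms.
Variables (R : realType) (X : Type) (d : X -> X -> R) (Gam : letter X -> R -> R).

(* N^theta_Gamma on a word whose first letter has index m; fuel = size. *)
Fixpoint Nf (fuel : nat) (th : nat -> nat) (m : nat) (w : seq (letter X)) : R :=
  match fuel with
  | 0 => 0
  | fuel'.+1 =>
    match w with
    | [::] => 0
    | [:: a] => dbar d E a
    | a :: t =>
      let k := (th m - m)%N in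
      if (k < (size w).-1)%N then
        Nf fuel' th m (take k.+1 w) + Nf fuel' th (m + k.+1) (drop k.+1 w)
      else
        let x := linv a in
        let y := last a t in
        let w1 := take (size w - 2) (drop 1 w) in
        let n1 := Nf fuel' th m.+1 w1 in
        dbar d x y + Num.max (Gam x n1) (Gam y n1)
    end
  end.

Definition Ntheta (th : nat -> nat) (w : seq (letter X)) : R := Nf (size w) th 0 w.

Definition NGamma (w : seq (letter X)) : R :=
  inf [set z | exists ws th, [/\ ws <> [::], reduced ws = w,
                 is_match 0 (size ws).-1 th & z = Ntheta th ws]].

Definition deltaGamma (u v : seq (letter X)) : R := NGamma (fmul (finv u) v).

Definition GammaG (g : seq (letter X)) (r : R) : \bar R :=
  maxe r%:E (ereal_sup [set (deltaGamma [:: E] (fmul (fmul (finv g) h) g))%:E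
                       | h in [set h | irreducible h /\ deltaGamma [:: E] h <= r]]).
End Norms.

Definition baire := nat -> nat.
Definition dBaire (R : realType) (x y : baire) : R :=
  sup ([set 0] `|` [set (2%:R : R) ^- n | n in [set n | x n <> y n]]).

(* Main.v *)
Require Import Defs.
From HB Require Import structures.
From mathcomp Require Import all_boot all_order all_algebra.
From mathcomp Require Import all_classical all_reals all_analysis.
From Stdlib Require Import ClassicalEpsilon.
From mathcomp Require Import zify.
Import Order.TTheory GRing.Theory Num.Theory.
Import numFieldNormedType.Exports.
Local Open Scope classical_set_scope.
Local Open Scope ring_scope.

Set Implicit Arguments. Unset Strict Implicit.
Section FG.
Variable X : Type.
Implicit Types (a b : letter X) (s t u v : seq (letter X)).

Definition push a s : seq (letter X) :=
  match a with
  | E => s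
  | _ => match s with
         | b :: s' => if pselect (b = linv a) then s' else a :: s
         | [::] => [:: a]
         end
  end.

Fixpoint rok s : Prop :=
  match s with
  | [::] => True
  | a :: t => [/\ a <> E, rok t & (match t with b :: _ => b <> linv a | [::] => True end)]
  end.

Definition K u := foldr push [::] u.
Definition canon u := if K u is _ :: _ then K u else [:: E].

Lemma linvK a : linv (linv a) = a. Proof. by case: a. Qed.
Lemma linv_neE a : a <> E -> linv a <> E. Proof. by case: a. Qed.

Lemma pushE a s : a <> E -> push a s =
  match s with
  | b :: s' => if pselect (b = linv a) then s' else a :: s
  | [::] => [:: a]
  end.
Proof. by case: a. Qed.

Lemma push_rok a s : rok s -> rok (push a s).
Proof.
case: (pselect (a = E)) => [->//|aE].
rewrite pushE //; case: s => [|b s'] /=; first by [].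
case: pselect => [_ [] //|bn rs]; by split.
Qed.

Lemma rok_foldr t u : rok t -> rok (foldr push t u).
Proof. by move=> rt; elim: u => //= a u IH; apply: push_rok. Qed.

Lemma K_rok u : rok (K u). Proof. exact: rok_foldr. Qed.

Lemma push_cancel a s : rok s -> push a (push (linv a) s) = s.
Proof.
case: (pselect (a = E)) => [->//|aE] rs.
have laE := linv_neE aE.
rewrite (pushE _ laE); case: s rs => [|b s'] /=.
  by rewrite pushE //; case: pselect.
move=> [bE rs' hb].
case: pselect => [bl|bn] /=.
  rewrite linvK in bl; subst b.
  rewrite pushE //; case: s' rs' hb => [|c s''] rs' hb //.
  by destruct (pselect (c = linv a)).
rewrite pushE //=.
by destruct (pselect (linv a = linv a)).
Qed.

Lemma K_id s : rok s -> K s = s.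
Proof.
elim: s => //= a t IH [aE rt ht]; rewrite IH // pushE //.
by case: t rt ht {IH} => //= b t' _ hb; case: pselect.
Qed.

Lemma foldr_push_push t a s : rok t ->
  foldr push t (push a s) = push a (foldr push t s).
Proof.
move=> rt; case: (pselect (a = E)) => [->//|aE].
rewrite pushE //; case: s => [|b s'] //=.
case: pselect => [bl|//] /=; subst b; rewrite push_cancel //; exact: rok_foldr.
Qed.

Lemma foldr_push_K t u : rok t -> foldr push t u = foldr push t (K u).
Proof.
move=> rt; elim: u => //= a u IH.
by rewrite IH foldr_push_push.
Qed.

Lemma K_cat u v : K (u ++ v) = foldr push (K v) u.
Proof. by rewrite /K foldr_cat. Qed.

Lemma step_K u v : red_step u v -> K u = K v.
Proof.
case=> [[w1 [w2 [x [-> ->]]]]|[w1 [w2 [-> [_ ->]]]]].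
  by rewrite !K_cat /= push_cancel //; exact: K_rok.
by rewrite !K_cat.
Qed.

Lemma star_K u v : red_star u v -> K u = K v.
Proof. by elim=> // u0 v0 w0 /step_K -> . Qed.

Lemma step_cons a u v : red_step u v -> red_step (a :: u) (a :: v).
Proof.
case=> [[w1 [w2 [x [-> ->]]]]|[w1 [w2 [-> [_ ->]]]]].
  by left; exists (a :: w1), w2, x.
by right; exists (a :: w1), w2; split; first done; split; last done; left.
Qed.

Lemma star_cons a u v : red_star u v -> red_star (a :: u) (a :: v).
Proof.
elim=> [w0|u0 v0 w0 h _ IH]; first exact: red_refl.
exact: red_trans (step_cons a h) IH.
Qed.

Lemma star_step u v : red_step u v -> red_star u v.
Proof. by move=> h; apply: red_trans h (red_refl _). Qed.

Lemma star_trans u v w : red_star u v -> red_star v w -> red_star u w.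
Proof. by elim=> // u0 v0 w0 h _ IH /IH; apply: red_trans. Qed.

Lemma canon_star u : u <> [::] -> red_star u (canon u).
Proof.
elim: u => [//|a u IH] _.
case: u IH => [|b u] IH.
  rewrite /canon /=; case: a => [x|x|] /=; exact: red_refl.
have {IH} := IH ltac:(done).
set u' := b :: u => IH.
apply: (star_trans (star_cons a IH)).
rewrite {2}/canon (_ : K (a :: u') = push a (K u')) //.
rewrite /canon; case: (K u') (K_rok u') => [|c s] rs.
  apply: (@red_trans _ _ [:: a]).
    by right; exists [:: a], [::]; split; first done; split; last done; left.
  by case: a => [x|x|] /=; exact: red_refl.
case: (pselect (a = E)) => [->|aE] /=.
  by apply: star_step; right; exists [::], (c :: s); split; first done; split; last done; right.
rewrite pushE //.
destruct (pselect (c = linv a)) as [cl|cn] => /=; last exact: red_refl.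
subst c; apply: (@red_trans _ _ (E :: s)).
  by left; exists [::], s, a.
case: s rs => [|d s] rs; first exact: red_refl.
by apply: star_step; right; exists [::], (d :: s); split; first done; split; last done; right.
Qed.

Lemma rok_nth s : rok s <->
  (forall i, (i < size s)%N -> nth E s i <> E) /\
  (forall i, (i.+1 < size s)%N -> nth E s i <> linv (nth E s i.+1)).
Proof.
elim: s => [|a t IH] /=; first by split => // _; split.
split.
  move=> [aE /IH [h1 h2] ht]; split.
    by case=> [|i] //= /h1.
  case=> [|i] /=; last by move=> /h2.
  case: t ht {h1 h2 IH} => //= b t hb _ ab; apply: hb; by rewrite ab linvK.
move=> [h1 h2]; split.
- exact: (h1 0%N).
- by apply/IH; split => i hi; [apply: (h1 i.+1) | apply: (h2 i.+1)].
- case: t h1 h2 {IH} => //= b t _ h2 bl; apply: (h2 0%N) => //=.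
  by rewrite bl linvK.
Qed.

Lemma rok_irr s : rok s -> s <> [::] -> irreducible s.
Proof. by move=> /rok_nth [h1 h2] sn; right. Qed.

Lemma canon_irr u : irreducible (canon u).
Proof.
rewrite /canon; case Ku: (K u) => [|c s]; first by left.
by apply: rok_irr => //; rewrite -Ku; exact: K_rok.
Qed.

Lemma irr_canon v : irreducible v -> canon v = v.
Proof.
case=> [->//|[vn [h1 h2]]].
have rv : rok v by apply/rok_nth.
by rewrite /canon K_id //; case: v vn {h1 h2 rv}.
Qed.

Lemma canon_eqK u v : K u = K v -> canon u = canon v.
Proof. by rewrite /canon => ->. Qed.

Lemma K_canon u : K (canon u) = K u.
Proof.
rewrite /canon; case Ku: (K u) => [|c s] //.
by rewrite -Ku K_id //; exact: K_rok.
Qed.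

Lemma reduced_canon u : u <> [::] -> reduced u = canon u.
Proof.
move=> un; rewrite /reduced.
set P := (fun v => irreducible v /\ red_star u v).
have [] : P (epsilon (inhabits [:: E]) P).
  apply: epsilon_spec; exists (canon u); split; [exact: canon_irr|exact: canon_star].
set v := epsilon _ _ => iv sv.
by rewrite -(irr_canon iv); apply: canon_eqK; rewrite (star_K sv).
Qed.

Lemma cat1_nn u (a : letter X) : u ++ [:: a] <> [::].
Proof. by case: u. Qed.

Lemma K_cons a u : K (a :: u) = push a (K u). Proof. by []. Qed.

Lemma conj_reduced (w : letter X) ws h : ws <> [::] ->
  reduced ws = reduced (E :: h) ->
  reduced (linv w :: ws ++ [:: w]) =
  reduced ([:: E] ++ Defs.fmul (Defs.fmul (Defs.finv [:: w]) h) [:: w]).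
Proof.
move=> wsn hr; rewrite /Defs.fmul /Defs.finv /=.
rewrite !reduced_canon //; try exact: cat1_nn.
apply: canon_eqK.
have KK : K ws = K h.
  by have := congr1 K hr; rewrite !reduced_canon // !K_canon.
have KE x : K (E :: x) = K x by [].
rewrite K_cons KE.
rewrite K_canon !K_cat (foldr_push_K (canon _) (K_rok _)) K_canon.
have rt := K_rok [:: w]; set t := K [:: w] in rt *.
rewrite K_cons (foldr_push_K ws rt) KK foldr_push_push //.
Qed.
End FG.

Section NfL.
Variables (R : realType) (X : Type) (d : X -> X -> R) (Gam : letter X -> R -> R).

Lemma Nf_fuel f1 f2 th m w : (size w <= f1)%N -> (size w <= f2)%N ->
  Nf d Gam f1 th m w = Nf d Gam f2 th m w.
Proof.
elim: f1 f2 th m w => [|f1 IH] f2 th m w h1 h2.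
  by case: w h1 h2 => //; case: f2.
case: f2 h2 => [|f2] h2; first by case: w h1 h2.
case: w h1 h2 => [//|a [//|b t]] h1 h2 /=.
rewrite /= in h1 h2; case: ifP => hk; rewrite !(IH f2) //= ?size_take ?size_drop /=; try (case: ifP => /=); lia.
Qed.

Lemma Nf_shift f th th' m w :
  (forall i, (m <= i < m + size w)%N -> th' i.+1 = (th i).+1) ->
  Nf d Gam f th' m.+1 w = Nf d Gam f th m w.
Proof.
elim: f th th' m w => [//|f IH] th th' m w H.
case: w H => [//|a [//|b t]] H /=.
have e : (th' m.+1 - m.+1 = th m - m)%N by rewrite H ?subSS //=; lia.
rewrite e; case: ifP => hk.
  rewrite (IH th) ?addSn ?(IH th) //= => i hi; apply: H;
    move: hi; rewrite ?size_take ?size_drop /=; try (case: ifP => /=); lia.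
rewrite (IH th) // => i hi; apply: H; move: hi; rewrite ?size_take ?size_drop /=;
  try (case: ifP => /=); lia.
Qed.

Lemma Nf_ge0 f th m w :
  (forall x y, 0 <= d x y) -> (forall x r, 0 <= r -> r <= Gam x r) ->
  0 <= Nf d Gam f th m w.
Proof.
move=> hd hG.
have db a b : 0 <= dbar d a b by case: a => [x|x|]; case: b => [y|y|]; rewrite /= ?ler01 ?hd.
elim: f th m w => [//|f IH] th m w.
case: w => [//|a [|b t]]; first exact: db.
rewrite /=.
case: ifP => hk; first by rewrite addr_ge0.
rewrite addr_ge0 // le_max; apply/orP; left.
exact: le_trans (IH _ _ _) (hG _ _ (IH _ _ _)).
Qed.
End NfL.

Definition ext (n : nat) (th : nat -> nat) (i : nat) : nat :=
  if i == 0%N then n.+1 else if i == n.+1 then 0%N else (th i.-1).+1.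

Lemma ext_mid n th i : (0 < i <= n)%N -> ext n th i = (th i.-1).+1.
Proof. move=> hi; rewrite /ext; case: eqP => [|_]; first lia. case: eqP => //; lia. Qed.

Lemma ext_match n th : is_match 0 n.-1 th -> (0 < n)%N -> is_match 0 n.+1 (ext n th).
Proof.
move=> [h1 h2] n0.
have P1 : forall i, (0 <= i <= n.+1)%N -> (0 <= ext n th i <= n.+1)%N /\ ext n th (ext n th i) = i.
  move=> i hi.
  case: (i =P 0%N) => [->|i0].
    by rewrite /ext eqxx /= eqxx; split => //; lia.
  case: (i =P n.+1) => [->|i1].
    by rewrite /ext /= eqxx /=; split => //; lia.
  have hi' : (0 < i <= n)%N by lia.
  have [r e] := h1 i.-1 ltac:(lia).
  rewrite ext_mid // ext_mid /=; last lia.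
  by rewrite e; split; lia.
split => // i j hi hj [ij jt tt].
have [ri _] := P1 i hi; have [rj _] := P1 j hj.
case: (i =P 0%N) => [i0|i0].
  by subst i; have e0 : ext n th 0 = n.+1 by []; lia.
case: (j =P n.+1) => [j1|j1]; first lia.
have hi' : (0 < i <= n)%N by lia.
have hj' : (0 < j <= n)%N by lia.
move: jt tt; rewrite !ext_mid // => jt tt.
apply: (h2 i.-1 j.-1); first lia; first lia.
split; lia.
Qed.

Lemma Nf_outer (R : realType) (X : Type) (d : X -> X -> R) (Gam : letter X -> R -> R)
  f th m a b t : ((size t).+1 <= th m - m)%N ->
  Nf d Gam f.+1 th m (a :: b :: t) =
  dbar d (linv a) (last b t) +
  Num.max (Gam (linv a) (Nf d Gam f th m.+1 (take (size t) (b :: t))))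
          (Gam (last b t) (Nf d Gam f th m.+1 (take (size t) (b :: t)))).
Proof.
move=> h; cbn [Nf]; rewrite ifF; last by apply/negbTE; rewrite -leqNgt.
by rewrite /= subn2.
Qed.

Lemma Nf_conj (R : realType) (X : Type) (d : X -> X -> R) (Gam : letter X -> R -> R)
  ws th (w : letter X) : dbar d w w = 0 -> ws <> [::] ->
  Ntheta d Gam (ext (size ws) th) (linv w :: ws ++ [:: w]) = Gam w (Ntheta d Gam th ws).
Proof.
move=> hw; case: ws => [//|b t] _.
have ht : t ++ [:: w] = rcons t w by rewrite cats1.
rewrite /Ntheta cat_cons ht.
rewrite (_ : size _ = (size (rcons t w)).+2) //.
rewrite Nf_outer; last by rewrite /ext /= size_rcons subn0.
rewrite (_ : linv (linv w) = w); last by clear ht; case: w hw.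
rewrite last_rcons hw add0r maxxx.
rewrite size_rcons -cats1 -cat_cons (take_size_cat _ (s1 := b :: t)) //.
rewrite (@Nf_shift _ _ _ _ _ th); last by move=> i hi; rewrite ext_mid //=; lia.
by rewrite (@Nf_fuel _ _ _ _ _ (size t).+1).
Qed.

Lemma dBaire_ge0 (R : realType) (x y : baire) : 0 <= dBaire R x y.
Proof.
rewrite /dBaire.
have hs : has_sup ([set (0:R)] `|` [set (2%:R : R) ^- n | n in [set n | x n <> y n]]).
  split; first by exists 0; left.
  exists 1 => _ [->|[n _ <-]]; first exact: ler01.
  by rewrite invf_le1 ?exprn_gt0 // exprn_ege1 // ler1n.
by apply: sup_upper_bound => //; left.
Qed.

Lemma dBaire_xx (R : realType) (x : baire) : dBaire R x x = 0.
Proof.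
rewrite /dBaire.
have -> : [set (2%:R : R) ^- n | n in [set n | x n <> x n]] = set0.
  by apply/seteqP; split => y //=; case=> n hn.

by rewrite setU0 sup1.
Qed.

Theorem lemma3p3 (R : realType) (Gam : letter baire -> R -> R) :
  is_scale Gam ->
  (forall x : letter baire, {within [set r : R | 0 <= r], continuous (Gam x)}) ->
  forall (w : letter baire) (r : R), 0 <= r ->
    (GammaG (@dBaire R) Gam [:: w] r <= (Gam w r)%:E)%E.
Proof.
move=> [hE hge hz hmon _] hcont w r r0.
rewrite /GammaG ge_max; apply/andP; split; first by rewrite lee_fin hge.
apply: ub_ereal_sup => _ [h [hirr hle] <-]; rewrite lee_fin.
move: hle; rewrite /deltaGamma /NGamma.
set S := [set z | _].
set S' := [set z | _].
move=> hle.
have Nge0 th m ws : 0 <= Nf (@dBaire R) Gam (size ws) th m ws.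
  exact: (Nf_ge0 (size ws) th m ws (@dBaire_ge0 R) hge).
have hw : dbar (@dBaire R) w w = 0.
  by move: w {S S' hle hirr}; case=> [x|x|] /=; rewrite ?dBaire_xx.
have lbS : lbound S 0 by move=> _ [ws [th [_ _ _ ->]]]; exact: Nge0.
have lbS' : lbound S' 0 by move=> _ [ws [th [_ _ _ ->]]]; exact: Nge0.
have neS : S !=set0.
  exists (Ntheta (@dBaire R) Gam id (E :: h)), (E :: h), id; split => //.
  by split => // i j _ _ [ij ji _]; move: ji; rewrite ltnNge ltnW.
have key z : S z -> S' (Gam w z).
  move=> [ws [th [wsn hr hm ->]]].
  exists (linv w :: ws ++ [:: w]), (ext (size ws) th); split => //.
  - by rewrite (conj_reduced w wsn hr).
  - rewrite /= size_cat addn1 /=; apply: ext_match => //.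
    by case: ws wsn {hr hm}.
  - by rewrite Nf_conj.
have hS' z : S z -> inf S' <= Gam w z.
  by move=> /key hz'; apply: ge_inf => //; exists 0.
apply/ler_addgt0Pr => e e0.
have := (subspace_continuousP _ _).1 (hcont w) r r0.
move=> /cvgrPdist_lt /(_ e e0) /nbhs_ballP [del del0 hdel].
have [z Sz zlt] := @inf_adherent _ S del del0 (conj neS (ex_intro _ 0 lbS)).
apply: le_trans (hS' z Sz) _.
have z0 : 0 <= z by exact: lbS.
case: (leP z r) => zr.
  by apply: le_trans (hmon _ _ _ z0 zr) _; rewrite lerDl ltW.
have : ball r del z.
  rewrite /ball /= distrC ger0_norm; last by rewrite subr_ge0 ltW.
  by rewrite ltrBlDl; apply: (lt_le_trans zlt); apply: lerD.
move=> /hdel /(_ z0) hzz.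
have := ltW hzz; rewrite /= ler_distlC => /andP [_].
by [].
Qed.
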